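(* For all positive integers $n\geq 2$ and $t$, $|D_{n,t}|=\left\lceil\frac{n^t}{n+1}\right\rceil$.
   Context: For a positive integer $n$ let $[n]=\{1,\dots,n\}$; vertices of the Sierpiński graph $S(K_n,t)$ are words in $[n]^t$. Write $a^k$ for the word consisting of $k$ copies of the letter $a$. The sets $D_{n,t}\subseteq[n]^t$ are defined recursively: $D_{n,1}=\{1\}$, $D_{n,2}=\{11,21,\dots,n1\}$. For $t\geq 3$ and $\mathbf v=v_1\cdots v_{t-2}\in D_{n,t-2}$ put $E_1(\mathbf v)=\{v_1\cdots v_{t-2}\alpha\alpha:\alpha\in[n]\}$, $E_2(\mathbf v)=\{v_1\cdots v_{t-3}\alpha\beta v_{t-2}:\alpha,\beta\in[n]\setminus\{v_{t-2}\}\}$, and, if $\mathbf v$ is not a constant word, let $\ell$ be the largest index in $[t-3]$ with $v_\ell\neq v_{\ell+1}$ and put $E_3(\mathbf v)=\{v_1\cdots v_{\ell-1}v_{\ell+1}v_\ell^{\,t-\ell-2}\alpha v_\ell:\alpha\in[n]\setminus\{v_\ell\}\}$. If $t\geq 3$ is odd, $D_{n,t}=E_1(1^{t-2})\cup E_2(1^{t-2})\cup\bigcup_{\mathbf v\in D_{n,t-2}\setminus\{1^{t-2}\}}\big(E_1(\mathbf v)\cup E_2(\mathbf v)\cup E_3(\mathbf v)\big)$. If $t\geq 4$ is even, $D_{n,t}=\{1^{t-2}\alpha1:\alpha\in[n]\}\cup\bigcup_{\mathbf v\in D_{n,t-2}\setminus\{1^{t-2}\}}\big(E_1(\mathbf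 v)\cup E_2(\mathbf v)\cup E_3(\mathbf v)\big)$. (In this recursion $1^{t-2}\in D_{n,t-2}$ is the only constant word in $D_{n,t-2}$, so $E_3$ is applied only to non-constant words.) *)

(* Defs.v *)
From mathcomp Require Import all_boot.
Set Implicit Arguments. Unset Strict Implicit. Unset Printing Implicit Defensive.

(* Words over [n] = {1,...,n} are represented as sequences of naturals
   (letters 1..n); v_i (1-indexed) is nth 0 v (i-1). *)

Definition letters (n : nat) : seq nat := iota 1 n.
Definition letters_except (n x : nat) : seq nat := [seq a <- letters n | a != x].

Definition E1 (n : nat) (v : seq nat) : seq (seq nat) :=
  [seq v ++ [:: a; a] | a <- letters n].

Definition E2 (n : nat) (v : seq nat) : seq (seq nat) :=
  let k := size v in
  let lst := nth 0 v (k - 1) in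
  [seq take (k - 1) v ++ [:: a; b; lst]
   | a <- letters_except n lst, b <- letters_except n lst].

Definition ell (v : seq nat) : nat :=
  last 0 [seq i <- iota 1 (size v - 1) | nth 0 v (i - 1) != nth 0 v i].

(* E_3(v) = { v_1..v_{l-1} v_{l+1} v_l^{t-l-2} alpha v_l : alpha <> v_l },
   where t = size v + 2 *)
Definition E3 (n : nat) (v : seq nat) : seq (seq nat) :=
  let l := ell v in
  let vl := nth 0 v (l - 1) in
  let vl1 := nth 0 v l in
  [seq take (l - 1) v ++ [:: vl1] ++ nseq (size v - l) vl ++ [:: a; vl]
   | a <- letters_except n vl].

(* D n t : a list of words enumerating D_{n,t} (possibly with repetitions;
   the set D_{n,t} is the set of its elements).  D n 0 is unused. *)
Fixpoint D (n t : nat) {struct t} : seq (seq nat) :=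
  match t with
  | 0 => [::]
  | 1 => [:: [:: 1]]
  | 2 => [seq [:: a; 1] | a <- letters n]
  | S (S (S s as u)) =>
      let prev := D n u in
      let c := nseq u 1 in
      let rest := flatten [seq E1 n v ++ E2 n v ++ E3 n v
                           | v <- prev & v != c] in
      if odd t then E1 n c ++ E2 n c ++ rest
      else [seq c ++ [:: a; 1] | a <- letters n] ++ rest
  end.

Definition cardD (n t : nat) : nat := size (undup (D n t)).

(* Main.v *)
Require Import Defs.
From mathcomp Require Import all_boot.
From mathcomp Require Import zify.
Set Implicit Arguments. Unset Strict Implicit.

Definition nc (w : seq nat) := exists2 i, 0 < i < size w & nth 0 w (i - 1) != nth 0 w i.

Lemma ell_spec v l : 0 < l < size v -> nth 0 v (l - 1) != nth 0 v l ->
  (forall i, l < i < size v -> nth 0 v (i - 1) = nth 0 v i) -> ell v = l.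
Proof.
move=> /andP[l0 lk] Hne Heq; rewrite /ell.
have -> : size v - 1 = (l - 1) + (1 + (size v - 1 - l)) by lia.
rewrite iotaD iotaD.
have e1 : 1 + (l - 1) = l by lia.
rewrite e1 filter_cat filter_cat /= Hne.
have -> : [seq i <- iota (l + 1) (size v - 1 - l) | nth 0 v (i - 1) != nth 0 v i] = [::].
  rewrite (@eq_in_filter _ _ pred0) ?filter_pred0 //.
  move=> i; rewrite mem_iota => Hi /=; rewrite Heq ?eqxx //; lia.
by rewrite cats0 last_cat.
Qed.

Lemma nc_ell v : nc v -> [/\ 0 < ell v < size v, nth 0 v (ell v - 1) != nth 0 v (ell v)
   & forall i, ell v < i < size v -> nth 0 v (i - 1) = nth 0 v i].
Proof.
move=> Hnc.
pose P i := (0 < i < size v) && (nth 0 v (i - 1) != nth 0 v i).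
have exP : exists i, P i by case: Hnc => i Hi Hn; exists i; rewrite /P Hi Hn.
have bnd : forall i, P i -> i <= size v by move=> i /andP[/andP[_ /ltnW]].
case: (ex_maxnP exP bnd) => l /andP[Hl Hn] Hmax.
have Hrest : forall i, l < i < size v -> nth 0 v (i - 1) = nth 0 v i.
  move=> i /andP[li iv]; apply/eqP; apply/negPn/negP => Hne.
  have : P i by rewrite /P Hne iv andbT; lia.
  move/Hmax; lia.
by rewrite (@ell_spec v l Hl Hn Hrest).
Qed.

Definition phi (v : seq nat) := take (ell v - 1) v ++ [:: nth 0 v (ell v)] ++
  nseq (size v - ell v) (nth 0 v (ell v - 1)).

Lemma E3E n v : E3 n v = [seq phi v ++ [:: a; nth 0 v (ell v - 1)]
   | a <- letters_except n (nth 0 v (ell v - 1))].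
Proof. by rewrite /E3 /phi; apply: eq_map => a; rewrite -!catA. Qed.

Lemma size_phi v : nc v -> size (phi v) = size v.
Proof.
move/nc_ell=> [/andP[l0 lk] _ _].
rewrite /phi !size_cat size_take /= size_nseq.
case: ifP; lia.
Qed.

Lemma size_phi0 v : ell v = 0 -> size (phi v) = (size v).+1.
Proof. by move=> e; rewrite /phi e !size_cat /= size_nseq subn0 sub0n take0. Qed.

Lemma nth_phi v i : nc v -> i < size v ->
  nth 0 (phi v) i = if i < ell v - 1 then nth 0 v i
     else if i == ell v - 1 then nth 0 v (ell v) else nth 0 v (ell v - 1).
Proof.
move=> /nc_ell [/andP[l0 lk] _ _] iv.
rewrite /phi nth_cat size_take.
have -> : (ell v - 1 < size v) = true by lia.
case: ifP => h1; first by rewrite nth_take.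
rewrite /= .
case: ifP => h2.
  by have -> : i - (ell v - 1) = 0 by lia.
have -> : i - (ell v - 1) = (i - ell v).+1 by lia.
by rewrite /= nth_nseq; have -> : (i - ell v < size v - ell v) = true by lia.
Qed.

Lemma const_after v : nc v -> forall i, ell v <= i < size v -> nth 0 v i = nth 0 v (ell v).
Proof.
move=> Hnc; case: (nc_ell Hnc) => [/andP[l0 lk] _ Hr].
move=> i /andP[]; move: i; elim=> [|i IH] li iv.
  have -> : ell v = 0 by lia. by [].
case: (leqP (ell v) i) => h.
  rewrite -IH //; last lia.
  by rewrite -(Hr i.+1) ?subn1 //; lia.
by have -> : ell v = i.+1 by lia.
Qed.

Lemma phi_props v : nc v -> nc (phi v) /\ ell (phi v) = ell v.
Proof.
move=> Hnc; case: (nc_ell Hnc) => [/andP[l0 lk] Hn Hr].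
have sz := size_phi Hnc.
have H1 : nth 0 (phi v) (ell v - 1) = nth 0 v (ell v).
  rewrite nth_phi //; last lia. by rewrite ltnn eqxx.
have H2 : nth 0 (phi v) (ell v) = nth 0 v (ell v - 1).
  rewrite nth_phi //. have -> : (ell v < ell v - 1) = false by lia.
  by have -> : (ell v == ell v - 1) = false by lia.
have Hne : nth 0 (phi v) (ell v - 1) != nth 0 (phi v) (ell v) by rewrite H1 H2 eq_sym.
have Hrest : forall i, ell v < i < size (phi v) -> nth 0 (phi v) (i - 1) = nth 0 (phi v) i.
  move=> i Hi; rewrite sz in Hi; rewrite !nth_phi //; try lia.
  have -> : (i - 1 < ell v - 1) = false by lia.
  have -> : (i < ell v - 1) = false by lia.
  have -> : (i - 1 == ell v - 1) = false by lia.
  by have -> : (i == ell v - 1) = false by lia.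
have Hl : 0 < ell v < size (phi v) by rewrite sz l0 lk.
split; last exact: (@ell_spec (phi v) (ell v) Hl Hne Hrest).
by exists (ell v).
Qed.

Lemma phiK v : nc v -> phi (phi v) = v.
Proof.
move=> Hnc; case: (phi_props Hnc) => Hnc' El.
case: (nc_ell Hnc) => [/andP[l0 lk] _ _].
have sz := size_phi Hnc.
apply: (@eq_from_nth _ 0); first by rewrite size_phi // sz.
move=> i; rewrite size_phi // sz => iv.
rewrite nth_phi // ?sz // El.
case: ifP => h1; first by rewrite nth_phi // h1.
case: ifP => h2.
  rewrite nth_phi //. have -> : (ell v < ell v - 1) = false by lia.
  have -> : (ell v == ell v - 1) = false by lia.
  by rewrite (eqP h2).
rewrite nth_phi //; last lia. rewrite ltnn eqxx.
rewrite (const_after Hnc) //; lia.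
Qed.

Lemma last_phi v : nc v -> nth 0 (phi v) (size v - 1) = nth 0 v (ell v - 1).
Proof.
move=> Hnc; case: (nc_ell Hnc) => [/andP[l0 lk] _ _].
rewrite nth_phi //; last lia.
have -> : (size v - 1 < ell v - 1) = false by lia.
by have -> : (size v - 1 == ell v - 1) = false by lia.
Qed.

Definition g (w : seq nat) : seq nat :=
  let k := (size w).-2 in
  if nth 0 w k == nth 0 w k.+1 then take k w
  else if nth 0 w (k - 1) != nth 0 w k.+1 then rcons (take (k - 1) w) (nth 0 w k.+1)
  else phi (take k w).

Definition cls (w : seq nat) : nat :=
  let k := (size w).-2 in
  if nth 0 w k == nth 0 w k.+1 then 0
  else if nth 0 w (k - 1) != nth 0 w k.+1 then 1 else 2.

Lemma gE1 v a : g (v ++ [:: a; a]) = v /\ cls (v ++ [:: a; a]) = 0.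
Proof.
rewrite /g /cls size_cat /= addn2 /= !nth_cat ltnn subnn.
have -> : (size v).+1 < size v = false by lia.
have -> : (size v).+1 - size v = 1 by lia.
by rewrite /= eqxx; split => //; rewrite take_size_cat.
Qed.

Lemma gE2 v a b : 0 < size v -> a != nth 0 v (size v - 1) -> b != nth 0 v (size v - 1) ->
  g (take (size v - 1) v ++ [:: a; b; nth 0 v (size v - 1)]) = v /\
  cls (take (size v - 1) v ++ [:: a; b; nth 0 v (size v - 1)]) = 1.
Proof.
move=> v0 ha hb.
set x := nth 0 v (size v - 1).
have sz : size (take (size v - 1) v ++ [:: a; b; x]) = (size v).+2.
  rewrite size_cat size_take /=; case: ifP; lia.
have st : size (take (size v - 1) v) = size v - 1 by rewrite size_take; case: ifP; lia.
rewrite /g /cls sz /= !nth_cat st.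
have -> : (size v < size v - 1) = false by lia.
have -> : ((size v).+1 < size v - 1) = false by lia.
have -> : (size v - 1 < size v - 1) = false by lia.
have -> : size v - (size v - 1) = 1 by lia.
have -> : (size v).+1 - (size v - 1) = 2 by lia.
rewrite subnn /= (negbTE hb) ha; split => //.
rewrite take_size_cat // -take_nth; last lia.
have -> : (size v - 1).+1 = size v by lia.
by rewrite take_size.
Qed.

Lemma gE3 v a : nc v -> a != nth 0 v (ell v - 1) ->
  g (phi v ++ [:: a; nth 0 v (ell v - 1)]) = v /\ cls (phi v ++ [:: a; nth 0 v (ell v - 1)]) = 2.
Proof.
move=> Hnc ha; case: (nc_ell Hnc) => [/andP[l0 lk] _ _].
have sp := size_phi Hnc.
set y := nth 0 v (ell v - 1).
have n1 : nth 0 (phi v ++ [:: a; y]) (size v) = a by rewrite nth_cat sp ltnn subnn.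
have n2 : nth 0 (phi v ++ [:: a; y]) (size v).+1 = y.
  rewrite nth_cat sp; have -> : (size v).+1 < size v = false by lia.
  by have -> : (size v).+1 - size v = 1 by lia.
have n3 : nth 0 (phi v ++ [:: a; y]) (size v - 1) = y.
  rewrite nth_cat sp; have -> : (size v - 1 < size v) = true by lia.
  exact: last_phi.
rewrite /g /cls size_cat sp /= addn2 /= n1 n2 n3 (negbTE ha) eqxx /= take_size_cat //.
by rewrite phiK.
Qed.

Lemma uniq_flat (T S : eqType) (g : T -> S) (f : S -> seq T) (A : seq T) (s : seq S) :
  uniq A -> (forall w, w \in A -> g w \notin s) -> uniq s ->
  (forall v, v \in s -> uniq (f v)) -> (forall v w, v \in s -> w \in f v -> g w = v) ->
  uniq (A ++ flatten (map f s)).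
Proof.
move=> uA Ag us uf gf; rewrite cat_uniq uA /=; apply/andP; split.
  apply/hasPn => w /flatten_mapP [v vs wf]; apply/negP => wA.
  by move: (Ag w wA); rewrite (gf v w vs wf) vs.
elim: s us uf gf {Ag} => [|v s IH] //= /andP[vs us] uf gf.
rewrite cat_uniq uf ?mem_head //= IH //; first last.
- by move=> v' w vs' wf; apply: gf => //; rewrite in_cons vs' orbT.
- by move=> v' vs'; apply: uf; rewrite in_cons vs' orbT.
rewrite andbT; apply/hasPn => w /flatten_mapP [v' vs' wf]; apply/negP => wv.
have e1 := gf v w (mem_head _ _) wv.
have e2 : g w = v' by apply: gf => //; rewrite in_cons vs' orbT.
by move: vs; rewrite e1 in e2; rewrite e2 vs'.
Qed.

Lemma mem_letters n x : (x \in letters n) = (0 < x <= n).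
Proof. by rewrite /letters mem_iota add1n ltnS. Qed.

Lemma mem_le n x a : (a \in letters_except n x) = (a \in letters n) && (a != x).
Proof. by rewrite /letters_except mem_filter andbC. Qed.

Lemma uniq_letters n : uniq (letters n).
Proof. exact: iota_uniq. Qed.

Lemma uniq_le n x : uniq (letters_except n x).
Proof. exact: filter_uniq (uniq_letters n). Qed.

Lemma size_le n x : x \in letters n -> size (letters_except n x) = n - 1.
Proof.
move=> xl; rewrite /letters_except size_filter.
have := count_predC (pred1 x) (letters n).
rewrite (count_uniq_mem _ (uniq_letters n)) xl size_iota.
have -> : count (predC (pred1 x)) (letters n) = count (fun a => a != x) (letters n) by [].
lia.
Qed.

Lemma nc_cat v s : nc v -> nc (v ++ s).
Proof.
case=> i /andP[i0 iv] h; exists i; first by rewrite size_cat i0 /=; lia.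
rewrite !nth_cat iv; have -> : i - 1 < size v by lia. by [].
Qed.

Lemma nc_last w : 2 <= size w -> nth 0 w (size w - 2) != nth 0 w (size w - 1) -> nc w.
Proof.
move=> h2 h; exists (size w - 1); first lia.
by have -> : size w - 1 - 1 = size w - 2 by lia.
Qed.

Lemma phi_sub v : nc v -> {subset phi v <= v}.
Proof.
move=> Hnc; case: (nc_ell Hnc) => [/andP[l0 lk] _ _] x.
rewrite /phi !mem_cat => /orP[/mem_take //|/orP[]].
  by rewrite inE => /eqP ->; apply: mem_nth.
rewrite mem_nseq => /andP[_ /eqP ->]; apply: mem_nth; exact: leq_ltn_trans (leq_subr 1 _) lk.
Qed.

Definition f n v := E1 n v ++ E2 n v ++ E3 n v.

Lemma E2E n v : E2 n v = [seq take (size v - 1) v ++ [:: a; b; nth 0 v (size v - 1)]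
   | a <- letters_except n (nth 0 v (size v - 1)), b <- letters_except n (nth 0 v (size v - 1))].
Proof. by []. Qed.

Lemma memE1 n v w : w \in E1 n v -> exists2 a, a \in letters n & w = v ++ [:: a; a].
Proof. by case/mapP => a ha ->; exists a. Qed.

Lemma memE2 n v w : w \in E2 n v -> exists a b, [/\ a \in letters_except n (nth 0 v (size v - 1)),
   b \in letters_except n (nth 0 v (size v - 1)) &
   w = take (size v - 1) v ++ [:: a; b; nth 0 v (size v - 1)]].
Proof. by rewrite E2E => /allpairsP [[a b] /= [ha hb ->]]; exists a, b. Qed.

Lemma memE3 n v w : w \in E3 n v -> exists2 a, a \in letters_except n (nth 0 v (ell v - 1))
   & w = phi v ++ [:: a; nth 0 v (ell v - 1)].
Proof. by rewrite E3E => /mapP [a ha ->]; exists a. Qed.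

Lemma f_props n v : nc v -> {subset v <= letters n} ->
  [/\ uniq (f n v), size (f n v) = n + (n - 1) * (n - 1) + (n - 1) &
     forall w, w \in f n v -> [/\ size w = (size v).+2, {subset w <= letters n}, nc w & g w = v]].
Proof.
move=> Hnc sub.
case: (nc_ell Hnc) => [/andP[l0 lk] _ _].
have v0 : 0 < size v by lia.
set x := nth 0 v (size v - 1).
have xv : x \in v by apply: mem_nth; rewrite subn1 ltn_predL.
set y := nth 0 v (ell v - 1).
have yv : y \in v by apply: mem_nth; exact: leq_ltn_trans (leq_subr 1 _) lk.
have H1 : forall w, w \in E1 n v -> [/\ size w = (size v).+2, {subset w <= letters n}, nc w & g w = v]
   /\ cls w = 0.
  move=> w /memE1 [a ha ->]; have [g1 c1] := gE1 v a; split => //; split => //.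
  - by rewrite size_cat /= addn2.
  - by move=> z; rewrite mem_cat => /orP[/sub //|]; rewrite !inE => /orP[] /eqP ->.
  - exact: nc_cat.
have H2 : forall w, w \in E2 n v -> [/\ size w = (size v).+2, {subset w <= letters n}, nc w & g w = v]
   /\ cls w = 1.
  move=> w /memE2 [a [b [ha hb ->]]].
  move: ha hb; rewrite !mem_le => /andP[ha ha'] /andP[hb hb'].
  have [g2 c2] := gE2 v0 ha' hb'; split => //.
  have sz : size (take (size v - 1) v ++ [:: a; b; x]) = (size v).+2.
    rewrite size_cat size_take /=; case: ifP; lia.
  split => //.
  - move=> z; rewrite mem_cat => /orP[/mem_take /sub //|]; rewrite !inE => /orP[/eqP ->//|/orP[/eqP ->//|/eqP ->]].
    exact: sub.
  - apply: nc_last; rewrite sz //.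
    have -> : (size v).+2 - 2 = (size v - 1) + 1 by lia.
    have -> : (size v).+2 - 1 = (size v - 1) + 2 by lia.
    rewrite !nth_cat size_take.
    have -> : (size v - 1 < size v) = true by lia.
    have -> : (size v - 1 + 1 < size v - 1) = false by lia.
    have -> : (size v - 1 + 2 < size v - 1) = false by lia.
    have -> : (size v - 1 + 1 - (size v - 1)) = 1 by lia.
    by have -> : (size v - 1 + 2 - (size v - 1)) = 2 by lia.
have H3 : forall w, w \in E3 n v -> [/\ size w = (size v).+2, {subset w <= letters n}, nc w & g w = v]
   /\ cls w = 2.
  move=> w /memE3 [a ha ->].
  move: ha; rewrite !mem_le => /andP[ha ha'].
  have [g3 c3] := gE3 Hnc ha'; split => //.
  have sz : size (phi v ++ [:: a; y]) = (size v).+2 by rewrite size_cat size_phi //= addn2.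
  split => //.
  - move=> z; rewrite mem_cat => /orP[/(phi_sub Hnc) /sub //|]; rewrite !inE => /orP[/eqP ->//|/eqP ->].
    exact: sub.
  - apply: nc_last; rewrite sz //.
    have -> : (size v).+2 - 2 = size (phi v) by rewrite size_phi //; lia.
    have -> : (size v).+2 - 1 = (size (phi v)).+1 by rewrite size_phi //; lia.
    by rewrite !nth_cat ltnn subnn ltnNge leqnSn /= subSnn.
split.
- rewrite /f !cat_uniq; apply/and5P; split.
  + rewrite map_inj_uniq ?uniq_letters // => a b.
    move/(congr1 (fun s => nth 0 s (size v))); by rewrite !nth_cat ltnn subnn.
  + apply/hasPn => w; rewrite mem_cat => /orP[/H2|/H3] [_ c]; apply/negP => /H1 [_];
      by rewrite c.
  + rewrite E2E; apply: allpairs_uniq; try exact: uniq_le.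
    move=> [a b] [a' b'] _ _ /= e.
    have := congr1 (fun s => nth 0 s (size v - 1)) e.
    have := congr1 (fun s => nth 0 s (size v)) e.
    rewrite !nth_cat size_take.
    have -> : (size v - 1 < size v) = true by lia.
    have -> : (size v < size v - 1) = false by lia.
    rewrite ltnn subnn.
    have -> : size v - (size v - 1) = 1 by lia.
    by move=> /= -> ->.
  + apply/hasPn => w /H3 [_ c]; apply/negP => /H2 [_]; by rewrite c.
  + rewrite E3E map_inj_uniq ?uniq_le // => a b.
    move/(congr1 (fun s => nth 0 s (size (phi v)))); by rewrite !nth_cat ltnn subnn.
- rewrite /f !size_cat size_map /letters size_iota E2E size_allpairs E3E size_map.
  have xl : x \in letters n by apply: sub.
  have yl : y \in letters n by apply: sub.
  by rewrite !size_le // addnA.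
- move=> w; rewrite /f !mem_cat => /orP[/H1 []//|/orP[/H2 []//|/H3 []//]].
Qed.

Definition DA n s := let c := nseq s.+1 1 in
  if odd s.+3 then E1 n c ++ E2 n c else [seq c ++ [:: a; 1] | a <- letters n].

Lemma D_eq n s : D n s.+3 = DA n s ++ flatten [seq f n v | v <- [seq v <- D n s.+1 | v != nseq s.+1 1]].
Proof.
have -> : D n s.+3 = if odd s.+3 then E1 n (nseq s.+1 1) ++ E2 n (nseq s.+1 1) ++
   flatten [seq f n v | v <- [seq v <- D n s.+1 | v != nseq s.+1 1]]
   else [seq (nseq s.+1 1) ++ [:: a; 1] | a <- letters n] ++
   flatten [seq f n v | v <- [seq v <- D n s.+1 | v != nseq s.+1 1]] := erefl.
rewrite /DA; case: ifP => _ //; by rewrite catA.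
Qed.

Lemma E2_props n (v w : seq nat) : 0 < size v -> {subset v <= letters n} -> w \in E2 n v ->
  [/\ size w = (size v).+2, {subset w <= letters n}, nc w & g w = v].
Proof.
move=> v0 sub.
set x := nth 0 v (size v - 1).
have xv : x \in v by apply: mem_nth; rewrite subn1 ltn_predL.
  move=> /memE2 [a [b [ha hb ->]]].
  move: ha hb; rewrite !mem_le => /andP[ha ha'] /andP[hb hb'].
  have [g2 c2] := gE2 v0 ha' hb'.
  have sz : size (take (size v - 1) v ++ [:: a; b; x]) = (size v).+2.
    rewrite size_cat size_take /=; case: ifP; lia.
  split => //.
  - move=> z; rewrite mem_cat => /orP[/mem_take /sub //|]; rewrite !inE => /orP[/eqP ->//|/orP[/eqP ->//|/eqP ->]].
    exact: sub.
  - apply: nc_last; rewrite sz //.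
    have -> : (size v).+2 - 2 = (size v - 1) + 1 by lia.
    have -> : (size v).+2 - 1 = (size v - 1) + 2 by lia.
    rewrite !nth_cat size_take.
    have -> : (size v - 1 < size v) = true by lia.
    have -> : (size v - 1 + 1 < size v - 1) = false by lia.
    have -> : (size v - 1 + 2 < size v - 1) = false by lia.
    have -> : (size v - 1 + 1 - (size v - 1)) = 1 by lia.
    by have -> : (size v - 1 + 2 - (size v - 1)) = 2 by lia.
Qed.

Lemma ell_nseq m x : ell (nseq m x) = 0.
Proof.
rewrite /ell (@eq_in_filter _ _ pred0) ?filter_pred0 // => i; rewrite mem_iota size_nseq => hi /=.
rewrite !nth_nseq; have -> : (i - 1 < m) = true by lia.
have -> : (i < m) = true by lia.
by rewrite eqxx.
Qed.

Lemma gEven s a : a != 1 -> g (nseq s.+1 1 ++ [:: a; 1]) = phi (nseq s.+1 1).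
Proof.
move=> ha.
have sw : size (nseq s.+1 1 ++ [:: a; 1]) = s.+3 by rewrite size_cat size_nseq addn2.
have n1 : nth 0 (nseq s.+1 1 ++ [:: a; 1]) s.+1 = a by rewrite nth_cat size_nseq ltnn subnn.
have n2 : nth 0 (nseq s.+1 1 ++ [:: a; 1]) s.+2 = 1.
  rewrite nth_cat size_nseq; have -> : (s.+2 < s.+1) = false by lia.
  by have -> : s.+2 - s.+1 = 1 by lia.
have n3 : nth 0 (nseq s.+1 1 ++ [:: a; 1]) (s.+1 - 1) = 1.
  rewrite nth_cat size_nseq; have -> : (s.+1 - 1 < s.+1) = true by lia.
  by rewrite nth_nseq; have -> : (s.+1 - 1 < s.+1) = true by lia.
have tk : take s.+1 (nseq s.+1 1 ++ [:: a; 1]) = nseq s.+1 1 by rewrite take_size_cat ?size_nseq.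
rewrite /g sw.
have -> : (s.+3).-2 = s.+1 by [].
by rewrite tk n1 n2 n3 (negbTE ha) eqxx.
Qed.

Lemma DA_props n s : 1 <= n ->
  [/\ uniq (DA n s), size (DA n s) = (if odd s.+3 then n + (n - 1) * (n - 1) else n),
      nseq s.+3 1 \in DA n s &
      forall w, w \in DA n s -> [/\ size w = s.+3, {subset w <= letters n},
        (w != nseq s.+3 1 -> nc w) & (g w = nseq s.+1 1 \/ size (g w) = s.+2)]].
Proof.
move=> n1.
set c := nseq s.+1 1.
have sc : size c = s.+1 by rewrite size_nseq.
have l1 : 1 \in letters n by rewrite mem_letters n1.
have csub : {subset c <= letters n} by move=> z; rewrite mem_nseq => /andP[_ /eqP ->].
have cx : nth 0 c (size c - 1) = 1 by rewrite nth_nseq sc; have -> : (s.+1 - 1 < s.+1) = true by lia.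
have e2 : nseq s.+3 1 = c ++ [:: 1; 1] by rewrite -addn2 nseqD.
have nca : forall a, a != 1 -> nc (c ++ [:: a; a]).
  move=> a ha; exists s.+1; first by rewrite size_cat sc /=; lia.
  rewrite !nth_cat sc ltnn subnn /= nth_nseq.
  have -> : (s.+1 - 1 < s.+1) = true by lia.
by rewrite eq_sym.
rewrite /DA -/c; case: ifP => hodd.
- split.
  + rewrite cat_uniq; apply/and3P; split.
    * rewrite map_inj_uniq ?uniq_letters // => a b.
      move/(congr1 (fun s => nth 0 s (size c))); by rewrite !nth_cat ltnn subnn.
    * apply/hasPn => w /memE2 [a [b [ha hb ->]]]; apply/negP => /memE1 [a' _ e].
      move: ha hb; rewrite !mem_le => /andP[_ ha] /andP[_ hb].
      have c0 : 0 < size c by rewrite sc.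
      have [_ c2] := gE2 c0 ha hb; have [_ c1] := gE1 c a'.
      by move: c2; rewrite e c1.
    * rewrite E2E; apply: allpairs_uniq; try exact: uniq_le.
      move=> [a b] [a' b'] _ _ /= e; rewrite ?size_nseq in e.
      have := congr1 (fun t => nth 0 t (s.+1 - 1)) e.
      have := congr1 (fun t => nth 0 t s.+1) e.
      rewrite !nth_cat size_take ?size_nseq.
      have -> : (s.+1 - 1 < s.+1) = true by lia.
      have -> : (s.+1 < s.+1 - 1) = false by lia.
      rewrite ltnn subnn.
      have -> : s.+1 - (s.+1 - 1) = 1 by lia.
      by move=> /= -> ->.
  + rewrite size_cat size_map /letters size_iota E2E size_allpairs.
    by rewrite cx size_le.
  + by rewrite mem_cat e2; apply/orP; left; apply/mapP; exists 1.
  + move=> w; rewrite mem_cat => /orP[/memE1 [a ha ->]|hw].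
    * have [g1 _] := gE1 c a; split.
      - by rewrite size_cat sc addn2.
      - by move=> z; rewrite mem_cat => /orP[/csub //|]; rewrite !inE => /orP[] /eqP ->.
      - move=> hne; apply: nca; apply: contra hne => /eqP ->; by rewrite e2.
      - by left.
    * have c0 : 0 < size c by rewrite sc.
      have [h1 h2 h3 h4] := E2_props c0 csub hw.
      by split => //; [rewrite h1 sc | left].
- split.
  + rewrite map_inj_uniq ?uniq_letters // => a b.
    move/(congr1 (fun s => nth 0 s (size c))); by rewrite !nth_cat ltnn subnn.
  + by rewrite size_map /letters size_iota.
  + by rewrite e2; apply/mapP; exists 1.
  + move=> w /mapP [a ha ->]; split.
    * by rewrite size_cat sc addn2.
    * by move=> z; rewrite mem_cat => /orP[/csub //|]; rewrite !inE => /orP[] /eqP ->.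
    * move=> hne; apply: nc_last; rewrite size_cat sc addn2 //.
      rewrite !nth_cat sc.
      have -> : (s.+3 - 2 < s.+1) = false by lia.
      have -> : (s.+3 - 1 < s.+1) = false by lia.
      have -> : (s.+3 - 2 - s.+1) = 0 by lia.
      have -> : (s.+3 - 1 - s.+1) = 1 by lia.
      by rewrite /=; apply: contra hne => /eqP ->; rewrite e2.
    * case: (eqVneq a 1) => [->|ha1].
        by left; have [g1 _] := gE1 c 1.
      by right; rewrite gEven // size_phi0 ?ell_nseq // size_nseq.
Qed.

Definition Inv n t (L : seq (seq nat)) := [/\ uniq L, forall w, w \in L -> size w = t,
  forall w, w \in L -> {subset w <= letters n}, nseq t 1 \in L &
  forall w, w \in L -> w != nseq t 1 -> nc w].

Lemma size_flat_const (S T : eqType) (h : S -> seq T) (s : seq S) K :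
  (forall v, v \in s -> size (h v) = K) -> size (flatten (map h s)) = K * size s.
Proof.
elim: s => [|v s IH] H /=; first by rewrite muln0.
rewrite size_cat H ?mem_head // IH ?mulnS //.
by move=> v' hv'; apply: H; rewrite in_cons hv' orbT.
Qed.

Lemma step n s : 1 <= n -> Inv n s.+1 (D n s.+1) ->
  Inv n s.+3 (D n s.+3) /\
  size (D n s.+3) = size (DA n s) + (n + (n - 1) * (n - 1) + (n - 1)) * (size (D n s.+1) - 1).
Proof.
move=> n1 [uP szP ltP cP ncP].
set c := nseq s.+1 1.
set S := [seq v <- D n s.+1 | v != c].
have [uA szA cA propA] := DA_props s n1.
have Sprops : forall v, v \in S -> [/\ nc v, size v = s.+1 & {subset v <= letters n}].
  move=> v; rewrite mem_filter => /andP[hne hv]; split; [exact: ncP | exact: szP | exact: ltP].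
have memD : forall w, w \in D n s.+3 -> (w \in DA n s) \/ exists2 v, v \in S & w \in f n v.
  move=> w; rewrite D_eq mem_cat => /orP[h|/flatten_mapP [v hv hw]]; [by left|right; exists v; [exact: hv|exact: hw]].
have fP : forall v w, v \in S -> w \in f n v ->
    [/\ size w = s.+3, {subset w <= letters n}, nc w & g w = v].
  move=> v1 w1 hv1 hw1; have [h1 h2 h3] := Sprops v1 hv1; case: (f_props h1 h3) => _ _ H.
  have [a1 a2 a3 a4] := H w1 hw1.
  by split => //; rewrite a1 h2.
split.
- split.
  + rewrite D_eq; apply: (uniq_flat (g:=g)) => //.
    * move=> w /propA [_ _ _ [->|hs]]; first by rewrite mem_filter eqxx.
      apply/negP => /Sprops [_ hs' _]; move: hs; rewrite hs'; lia.
    * exact: filter_uniq.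
    * by move=> v /Sprops [h1 _ h3]; case: (f_props h1 h3).
    * by move=> v w hv hw; case: (fP v w hv hw).
  + by move=> w /memD [/propA [] //| [v hv hw]]; case: (fP v w hv hw).
  + by move=> w /memD [/propA [] //| [v hv hw]]; case: (fP v w hv hw).
  + by rewrite D_eq mem_cat cA.
  + by move=> w /memD [/propA [] //| [v hv hw]]; case: (fP v w hv hw).
- rewrite D_eq size_cat; congr (_ + _).
  rewrite (@size_flat_const _ _ (f n) S (n + (n - 1) * (n - 1) + (n - 1))); last first.
    by move=> v /Sprops [h1 _ h3]; case: (f_props h1 h3).
  congr (_ * _).
  rewrite /S size_filter.
  have := count_predC (pred1 c) (D n s.+1).
  rewrite (count_uniq_mem _ uP) cP.
  have -> : count (predC (pred1 c)) (D n s.+1) = count (fun v => v != c) (D n s.+1) by [].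
  by move=> <- /=; rewrite add1n subn1.
Qed.

Lemma base1 n : 1 <= n -> Inv n 1 (D n 1) /\ (n + 1) * size (D n 1) = n ^ 1 + (if odd 1 then 1 else n).
Proof.
move=> n1; have l1 : 1 \in letters n by rewrite mem_letters n1.
split; last by rewrite /= expn1 muln1.
split => //.
- by move=> w; rewrite inE => /eqP ->.
- by move=> w; rewrite inE => /eqP -> z; rewrite inE => /eqP ->.
- by move=> w; rewrite inE => /eqP ->; rewrite eqxx.
Qed.

Lemma base2 n : 1 <= n -> Inv n 2 (D n 2) /\ (n + 1) * size (D n 2) = n ^ 2 + (if odd 2 then 1 else n).
Proof.
move=> n1; have l1 : 1 \in letters n by rewrite mem_letters n1.
split; last by rewrite /= size_map /letters size_iota; nia.
split.
- by rewrite /= map_inj_uniq ?uniq_letters // => a b [].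
- by move=> w /mapP [a _ ->].
- by move=> w /mapP [a ha ->] z; rewrite !inE => /orP[/eqP ->|/eqP ->].
- by apply/mapP; exists 1.
- move=> w /mapP [a ha ->] hne; exists 1 => //=.
  by apply: contra hne => /eqP ->.
Qed.

Lemma ar1 p X Z : (p.+2) * Z.+1 = X + 1 ->
  (p.+2) * (p.+1 + p * p + (p.+1 + p * p + p) * Z) = p.+1 * (p.+1 * X) + 1.
Proof.
move=> h.
apply: (@addIn (p.+1 * (p.+1 * 1))).
have -> : p.+1 * (p.+1 * X) + 1 + p.+1 * (p.+1 * 1) = p.+1 * (p.+1 * (X + 1)) + 1 by nia.
rewrite -h. nia.
Qed.
Lemma ar2 p X Z : (p.+2) * Z.+1 = X + p.+1 ->
  (p.+2) * (p.+1 + (p.+1 + p * p + p) * Z) = p.+1 * (p.+1 * X) + p.+1.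
Proof.
move=> h.
apply: (@addIn (p.+1 * (p.+1 * p.+1))).
have -> : p.+1 * (p.+1 * X) + p.+1 + p.+1 * (p.+1 * p.+1) = p.+1 * (p.+1 * (X + p.+1)) + p.+1 by nia.
rewrite -h. nia.
Qed.

Lemma main n : 2 <= n -> forall m,
  (Inv n m.+1 (D n m.+1) /\ (n + 1) * size (D n m.+1) = n ^ m.+1 + (if odd m.+1 then 1 else n)) /\
  (Inv n m.+2 (D n m.+2) /\ (n + 1) * size (D n m.+2) = n ^ m.+2 + (if odd m.+2 then 1 else n)).
Proof.
move=> n2; have n1 : 1 <= n by lia.
elim=> [|m [[I1 S1] IH2]]; first by split; [apply: base1 | apply: base2].
split => //.
have [I3 S3] := step n1 I1.
split => //.
have [_ szA _ _] := DA_props m n1.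
rewrite S3 szA.
have e3 : odd m.+3 = odd m.+1 by rewrite !oddS negbK.
have ex : n ^ m.+3 = n * (n * n ^ m.+1) by rewrite !expnS.
case: I1 => _ _ _ cP _.
have : 0 < size (D n m.+1) by case: (D n m.+1) cP.
rewrite e3 ex; move: S1; set X := n ^ m.+1; case: (size (D n m.+1)) => // Z.
have hn : n = n.-1.+1 by lia.
move: n.-1 hn => p hn; rewrite hn.
rewrite subn1 /= addn1.
rewrite subn1 /=.
case: (odd m) => /= S1 _; [exact: ar2 | exact: ar1].
Qed.

Theorem lemma2p4 (n t : nat) :
  2 <= n -> 0 < t -> cardD n t = (n ^ t + n) %/ (n + 1).
Proof.
move=> n2; case: t => // m _.
have [[[uD _ _ _ _] SD] _] := main n2 m.
rewrite /cardD undup_id //.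
set Y := size (D n m.+1).
have -> : n ^ m.+1 + n = Y * (n + 1) + (n - (if odd m.+1 then 1 else n)).
  move: SD; rewrite -/Y; case: (odd m.+1) => SD; lia.
rewrite divnMDl ?addn1 // divn_small ?addn0 //; lia.
Qed.
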